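(* Let $H$ be a separable infinite-dimensional complex Hilbert space and $T\in\mathcal{L}(H)$. If any of the following conditions holds, then $T$ is not universal: (i) the interior of the point spectrum $\sigma_p(T;H)$ is empty; (ii) the interior of the essential spectrum $\sigma_e(T;H)$ is empty; (iii) every non-zero eigenvalue $\alpha\in\sigma_p(T;H)$ has finite multiplicity.
   Context: $\mathcal{L}(H)$ denotes the bounded linear operators on $H$. Operators $T_1\in\mathcal{L}(H_1)$, $T_2\in\mathcal{L}(H_2)$ are similar if there is a linear isomorphism $J:H_1\to H_2$ with $T_1=J^{-1}T_2J$. An operator $U\in\mathcal{L}(H)$ is universal if for every $T\in\mathcal{L}(H)$ there exist a closed subspace $M\subset H$ with $U(M)\subset M$ and a constant $c\neq0$ such that $U|_M:M\to M$ and $cT:H\to H$ are similar. $\sigma_p(T;H)$ is the point spectrum and $\sigma_e(T;H)=\{\lambda: T-\lambda I\text{ is not Fredholm}\}$ the essential spectrum. *)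

(* Defs.v *)
(* Complex scalars are  R[i]  (mathcomp-real-closed
   `complex`) over an arbitrary  R : realType;  a complex Hilbert space is a
   complete normed R[i]-module whose norm comes from an inner product. *)
From HB Require Import structures.
From mathcomp Require Import all_boot all_order all_algebra.
From mathcomp Require Import all_classical all_reals all_analysis.
From mathcomp Require Export complex.
Import Order.TTheory GRing.Theory Num.Theory.
Import numFieldNormedType.Exports.

Set Implicit Arguments.
Unset Strict Implicit.
Unset Printing Implicit Defensive.

Local Open Scope ring_scope.
Local Open Scope classical_set_scope.

Section HilbertDefs.
Context {R : realType} {V : completeNormedModType R[i]}.

Definition is_inner_product (ip : V -> V -> R[i]) : Prop :=
  [/\ (forall x y z, ip (x + y) z = ip x z + ip y z),
      (forall (a : R[i]) x y, ip (a *: x) y = a * ip x y),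
      (forall x y, ip y x = (ip x y)^*) &
      (forall x, ip x x = `|x| ^+ 2)].

Definition hilbert_space : Prop := exists ip, is_inner_product ip.

Definition separable : Prop := exists u : nat -> V, closure (range u) = setT.

Definition finite_dim_set (A : set V) : Prop :=
  exists n (e : 'I_n -> V), forall x, A x ->
    exists c : 'I_n -> R[i], x = \sum_(i < n) c i *: e i.

Definition infinite_dimensional : Prop := ~ finite_dim_set setT.

Definition closed_subspace (M : set V) : Prop :=
  [/\ closed M, M 0,
      (forall x y, M x -> M y -> M (x + y)) &
      (forall (a : R[i]) x, M x -> M (a *: x))].

Definition point_spectrum (T : V -> V) : set R[i] :=
  [set l | exists x : V, x != 0 /\ T x = l *: x].

Definition fredholm (S : V -> V) : Prop :=
  [/\ closed (range S),
      finite_dim_set [set x | S x = 0] &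
      exists n (e : 'I_n -> V), forall y, exists x (c : 'I_n -> R[i]),
        y = S x + \sum_(i < n) c i *: e i].

Definition essential_spectrum (T : V -> V) : set R[i] :=
  [set l | ~ fredholm (fun x => T x - l *: x)].

Definition cinterior (A : set R[i]) : set R[i] := @interior R[i]^o A.

(* U restricted to M (a closed invariant subspace) is similar to c T:
   there is a bounded linear bijection J : M -> V with bounded inverse K
   such that U|_M = J^{-1} (c T) J. *)
Definition similar_restriction (U : V -> V) (M : set V) (c : R[i]) (T : V -> V)
  : Prop :=
  exists J K : V -> V,
    (forall x y, M x -> M y -> J (x + y) = J x + J y) /\
    (forall (a : R[i]) x, M x -> J (a *: x) = a *: J x) /\
    {within M, continuous J} /\
    continuous K /\
    (forall y, M (K y)) /\
    (forall x, M x -> K (J x) = x) /\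
    (forall y, J (K y) = y) /\
    (forall x, M x -> U x = K (c *: T (J x))).

Definition universal (U : V -> V) : Prop :=
  forall T : {linear V -> V}, continuous T ->
    exists (M : set V) (c : R[i]),
      [/\ closed_subspace M, (forall x, M x -> M (U x)), c != 0 &
          similar_restriction U M c T].

End HilbertDefs.

(* Main.v *)
Require Import Defs.
From HB Require Import structures.
From mathcomp Require Import all_boot all_order all_algebra.
From mathcomp Require Import all_classical all_reals all_analysis.
From mathcomp Require Import complex.
From mathcomp Require Import ring lra.
Import Order.TTheory GRing.Theory Num.Theory.
Import numFieldNormedType.Exports.
Local Open Scope ring_scope.
Local Open Scope classical_set_scope.
Unset Strict Implicit.
Unset Printing Implicit Defensive.
Section IP.
Context {R : realType} {V : completeNormedModType R[i]}.
Variable ip : V -> V -> R[i].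
Hypothesis Hip : is_inner_product ip.

Lemma ipDl x y z : ip (x + y) z = ip x z + ip y z. Proof. by case: Hip. Qed.
Lemma ipZl a x y : ip (a *: x) y = a * ip x y. Proof. by case: Hip. Qed.
Lemma ipC x y : ip y x = (ip x y)^*. Proof. by case: Hip. Qed.
Lemma ipxx x : ip x x = `|x| ^+ 2. Proof. by case: Hip. Qed.
Lemma ipDr x y z : ip x (y + z) = ip x y + ip x z.
Proof. by rewrite ipC ipDl rmorphD /= -!ipC. Qed.
Lemma ipZr a x y : ip x (a *: y) = a^* * ip x y.
Proof. by rewrite ipC ipZl rmorphM /= -ipC. Qed.
Lemma ip0l y : ip 0 y = 0.
Proof. by rewrite -(scale0r (0:V)) ipZl mul0r. Qed.
Lemma ip0r x : ip x 0 = 0.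
Proof. by rewrite ipC ip0l rmorph0. Qed.
Lemma ipNl x y : ip (- x) y = - ip x y.
Proof. by rewrite -scaleN1r ipZl mulN1r. Qed.
Lemma ipNr x y : ip x (- y) = - ip x y.
Proof. by rewrite ipC ipNl rmorphN /= -ipC. Qed.
Lemma ipBl x y z : ip (x - y) z = ip x z - ip y z. Proof. by rewrite ipDl ipNl. Qed.
Lemma ipBr x y z : ip x (y - z) = ip x y - ip x z. Proof. by rewrite ipDr ipNr. Qed.
Lemma ip_suml I (r : seq I) (P : pred I) (F : I -> V) y :
  ip (\sum_(i <- r | P i) F i) y = \sum_(i <- r | P i) ip (F i) y.
Proof. by apply: (big_morph (ip^~ y)) => [a b|]; [exact: ipDl | exact: ip0l]. Qed.
Lemma ip_sumr I (r : seq I) (P : pred I) (F : I -> V) x :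
  ip x (\sum_(i <- r | P i) F i) = \sum_(i <- r | P i) ip x (F i).
Proof. by apply: (big_morph (ip x)) => [a b|]; [exact: ipDr | exact: ip0r]. Qed.
Lemma ipxx_eq0 x : ip x x = 0 -> x = 0.
Proof. by rewrite ipxx => /eqP; rewrite expf_eq0 /= normr_eq0 => /eqP. Qed.

Lemma ip_expand x y a : ip (x + a *: y) (x + a *: y) =
  ip x x + a^* * ip x y + a * ip y x + a * a^* * ip y y.
Proof. rewrite ipDl !ipDr !ipZl !ipZr; ring. Qed.

Lemma polar_alg (F : comRingType) (j A B C D : F) : j * j = -1 ->
  (A + 1 * B + 1 * C + 1 * 1 * D) - (A + (-1) * B + (-1) * C + (-1) * (-1) * D)
  + j * (A + (-j) * B + j * C + j * (-j) * D)
  - j * (A + j * B + (-j) * C + (-j) * j * D) = 4%:R * B.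
Proof.
move=> h.
have -> : (A + 1 * B + 1 * C + 1 * 1 * D) - (A + (-1) * B + (-1) * C + (-1) * (-1) * D)
  + j * (A + (-j) * B + j * C + j * (-j) * D)
  - j * (A + j * B + (-j) * C + (-j) * j * D) = 4%:R * B + 2%:R * (j * j + 1) * (C - B)
  by ring.
by rewrite h addNr mulr0 mul0r addr0.
Qed.

Lemma ip_polar x y : ip x y = 4%:R^-1 * (ip (x + 1 *: y) (x + 1 *: y)
   - ip (x + (-1) *: y) (x + (-1) *: y) + 'i * ip (x + 'i *: y) (x + 'i *: y)
   - 'i * ip (x + (-'i) *: y) (x + (-'i) *: y)).
Proof.
rewrite !ip_expand !rmorphN /= rmorph1 conjCi opprK.
rewrite polar_alg; last by rewrite -expr2 sqrCi.
by rewrite mulrA mulVf ?mul1r // pnatr_eq0.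
Qed.

Lemma ip_contl y : continuous (fun z => (ip z y : R[i]^o)).
Proof.
have -> : (fun z => ip z y) = (fun z => 4%:R^-1 * (`|z + 1 *: y| ^+ 2
   - `|z + (-1) *: y| ^+ 2 + 'i * `|z + 'i *: y| ^+ 2
   - 'i * `|z + (-'i) *: y| ^+ 2)).
  by apply/funext => z; rewrite ip_polar !ipxx.
move=> z.
have H a : (fun w : V => `|w + a *: y| ^+ 2) @ z --> `|z + a *: y| ^+ 2.
  rewrite (_ : (fun w : V => _) = (fun w => `|w + a *: y| * `|w + a *: y|)); last first.
    by apply/funext => w; rewrite expr2.
  rewrite expr2; apply: cvgM; apply: cvg_norm; apply: cvgD => //; exact: cvg_cst.
rewrite /continuous_at; apply: cvgMl_tmp; apply: cvgB; [apply: cvgD; [apply: cvgB|apply: cvgMl_tmp]|apply: cvgMl_tmp]; exact: H.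
Qed.

Lemma ip_cvgl (u : nat -> V) x y : u @ \oo --> x -> (fun n => (ip (u n) y : R[i]^o)) @ \oo --> (ip x y : R[i]^o).
Proof. move=> ux; exact: (continuous_cvg _ (@ip_contl y x) ux). Qed.


Definition orthonormal (e : nat -> V) := forall m n, ip (e m) (e n) = (m == n)%:R.

Lemma sum_delta (F : nat -> R[i]) p q m : (p <= m < q)%N ->
  \sum_(p <= k < q) (k == m)%:R * F k = F m.
Proof.
move=> hm; rewrite (bigD1_seq m) ?mem_index_iota ?iota_uniq //= eqxx mul1r.
rewrite big1 ?addr0 // => k /negbTE ->; by rewrite mul0r.
Qed.

Lemma ip_sum_e (e : nat -> V) (He : orthonormal e) (a : nat -> R[i]) p q m :
  ip (\sum_(p <= k < q) a k *: e k) (e m) = if (p <= m < q)%N then a m else 0.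
Proof.
rewrite ip_suml; under eq_bigr do rewrite ipZl He mulrC.
case: ifP => hm; first exact: sum_delta.
rewrite big_seq; apply: big1 => k; rewrite mem_index_iota => hk.
have /negbTE -> : k != m by apply/eqP => km; move: hk; rewrite km hm.
by rewrite mul0r.
Qed.

Lemma pyth (e : nat -> V) (He : orthonormal e) (a : nat -> R[i]) p q :
  ip (\sum_(p <= k < q) a k *: e k) (\sum_(p <= k < q) a k *: e k)
  = \sum_(p <= k < q) a k * (a k)^*.
Proof.
rewrite ip_sumr; apply: eq_big_seq => k; rewrite mem_index_iota => hk.
by rewrite ipZr ip_sum_e // hk mulrC.
Qed.

Lemma bessel (e : nat -> V) (He : orthonormal e) x N :
  \sum_(0 <= k < N) ip x (e k) * (ip x (e k))^* <= ip x x.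
Proof.
set s := \sum_(0 <= k < N) ip x (e k) *: e k.
have h1 : ip s x = \sum_(0 <= k < N) ip x (e k) * (ip x (e k))^*.
  by rewrite ip_suml; apply: eq_bigr => k _; rewrite ipZl -ipC.
have h2 : ip x s = \sum_(0 <= k < N) ip x (e k) * (ip x (e k))^*.
  by rewrite ip_sumr; apply: eq_bigr => k _; rewrite ipZr mulrC.
have h3 := pyth _ He (fun k => ip x (e k)) 0 N.
have : 0 <= ip (x - s) (x - s) by rewrite ipxx exprn_ge0.
rewrite ipBl !ipBr h1 h2 h3 /s.
by rewrite subrr subr0 subr_ge0.
Qed.

Lemma nonneg_tail (c : nat -> R[i]) (B : R[i]) :
  (forall k, 0 <= c k) -> (forall N, \sum_(0 <= k < N) c k <= B) ->
  forall eps : R[i], 0 < eps ->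
  \forall n \near (\oo, \oo), \sum_(n.1 <= k < n.2) c k < eps.
Proof.
move=> c0 cB eps heps.
pose d k := complex.Re (c k).
have cd k : c k = ((d k)%:C)%C by rewrite /d RRe_real // ger0_real.
have d0 k : 0 <= d k by rewrite -ler0c -cd.
have B0 : 0 <= B by apply: le_trans (cB 0%N); rewrite big_geq.
have sd p q : \sum_(p <= k < q) c k = ((\sum_(p <= k < q) d k)%:C)%C.
  by rewrite rmorph_sum; apply: eq_bigr => k _; rewrite cd.
have : cvgn (series d).
  apply: nondecreasing_is_cvgn; first by apply: nondecreasing_series => n _ _; exact: d0.
  exists (complex.Re B) => _ [n _ <-]; rewrite /series /=.
  by rewrite -lecR RRe_real ?ger0_real // -sd.
move=> /cvg_cauchy /cauchy_seriesP /(_ (complex.Re eps)).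
have ->: (0 < complex.Re eps) = true by rewrite -ltcR RRe_real // gtr0_real.
move=> /(_ isT); apply: filterS => n hn.
rewrite sd -(RRe_real (gtr0_real heps)) ltcR.
by apply: le_lt_trans hn; exact: ler_norm.
Qed.

Lemma ortho_series_cvg (e : nat -> V) (He : orthonormal e) (a : nat -> R[i]) B :
  (forall N, \sum_(0 <= k < N) a k * (a k)^* <= B) ->
  cvgn (series (fun k => a k *: e k)).
Proof.
move=> aB; apply: cauchy_cvg; apply/cauchy_seriesP => eps heps.
have c0 k : 0 <= a k * (a k)^* by rewrite -normCK exprn_ge0.
have := nonneg_tail _ _ c0 aB _ (exprn_gt0 2 heps).
apply: filterS => n hn.
rewrite -(ltr_pXn2r (n:=2)) // ?nnegrE ?normr_ge0 ?(ltW heps) //.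
by rewrite -ipxx pyth.
Qed.

Lemma lim_norm_le (s : nat -> V) l (B : R[i]) : 0 <= B -> s @ \oo --> l ->
  (forall n, `|s n| <= B) -> `|l| <= B.
Proof.
move=> B0 sl sB; rewrite real_leNgt ?ger0_real //; apply/negP => Bl.
have he : 0 < `|l| - B by rewrite subr_gt0.
move/cvgrPdist_lt: sl => /(_ _ he) /filter_ex [n hn].
have := ler_normD (l - s n) (s n); rewrite subrK => h.
have := le_lt_trans h (ltr_leD hn (sB n)); rewrite subrK.
by rewrite ltxx.
Qed.

Definition ortho_seq (s : seq V) := forall i j, (i < size s)%N -> (j < size s)%N ->
  ip s`_i s`_j = (i == j)%:R.

Lemma exists_perp (Hinf : @infinite_dimensional R V) (s : seq V) : ortho_seq s ->
  exists u, (forall i, (i < size s)%N -> ip u s`_i = 0) /\ ip u u = 1.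
Proof.
move=> hs.
have : ~ (forall x : V, exists c : 'I_(size s) -> R[i],
            x = \sum_(i < size s) c i *: s`_i).
  by move=> h; apply: Hinf; exists (size s), (fun i => s`_i) => x _; exact: h.
move=> /existsNP [x hx].
set w := x - \sum_(0 <= i < size s) ip x s`_i *: s`_i.
have w0 : w != 0.
  apply/eqP => w0; apply: hx; exists (fun i => ip x s`_i).
  by apply/eqP; rewrite -subr_eq0 -(big_mkord xpredT (fun i => ip x s`_i *: s`_i)) -/w w0.
have wperp j : (j < size s)%N -> ip w s`_j = 0.
  move=> hj; rewrite ipBl ip_suml.
  rewrite (eq_big_seq (fun i => (i == j)%:R * ip x s`_i)); last first.
    by move=> i; rewrite mem_index_iota => /andP[_ hi]; rewrite ipZl hs // mulrC.
  by rewrite sum_delta ?hj // subrr.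
have nw : `|w| != 0 by rewrite normr_eq0.
exists (`|w|^-1 *: w); split.
  by move=> i hi; rewrite ipZl wperp // mulr0.
rewrite ipZl ipZr ipxx fmorphV /= (geC0_conj (normr_ge0 w)).
by field.
Qed.

Fixpoint gs_seq (F : seq V -> V) (n : nat) : seq V :=
  if n is n'.+1 then rcons (gs_seq F n') (F (gs_seq F n')) else [::].

Lemma exists_orthonormal (Hinf : @infinite_dimensional R V) :
  exists e : nat -> V, orthonormal e.
Proof.
have : forall s : seq V, exists u, ortho_seq s ->
    (forall i, (i < size s)%N -> ip u s`_i = 0) /\ ip u u = 1.
  move=> s; case: (pselect (ortho_seq s)) => h.
    by have [u hu] := exists_perp Hinf _ h; exists u.
  by exists 0.
move=> /choice [F hF].
have gsS n : gs_seq F n.+1 = rcons (gs_seq F n) (F (gs_seq F n)) by [].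
have sizeE n : size ((gs_seq F) n) = n.
  by elim: n => [|n IH] //; rewrite gsS size_rcons IH.
have orthoE n : ortho_seq ((gs_seq F) n).
  elim: n => [|n IH]; first by move=> i j.
  rewrite gsS.
  have [hp h1] := hF _ IH.
  move=> i j; rewrite !size_rcons sizeE !ltnS !nth_rcons sizeE.
  rewrite leq_eqVlt => /orP[/eqP ->|hi]; rewrite leq_eqVlt => /orP[/eqP ->|hj].
  - by rewrite ltnn eqxx h1.
  - by rewrite ltnn eqxx hj hp ?sizeE // (gtn_eqF hj).
  - by rewrite ltnn eqxx hi ipC hp ?sizeE // rmorph0 (ltn_eqF hi).
  - by rewrite hi hj IH ?sizeE.
have nthE n m i : (i < n)%N -> (n <= m)%N -> ((gs_seq F) m)`_i = ((gs_seq F) n)`_i.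
  move=> hi; elim: m => [|m IH]; first by rewrite leqn0 => /eqP ->.
  rewrite leq_eqVlt => /orP[/eqP -> //|]; rewrite ltnS => hm; rewrite gsS.
  by rewrite nth_rcons sizeE (leq_trans hi hm) IH.
exists (fun n => ((gs_seq F) n.+1)`_n) => m n.
have hm : ((gs_seq F) m.+1)`_m = ((gs_seq F) (maxn m n).+1)`_m.
  by rewrite (nthE m.+1) // ltnS leq_maxl.
have hn : ((gs_seq F) n.+1)`_n = ((gs_seq F) (maxn m n).+1)`_n.
  by rewrite (nthE n.+1) // ltnS leq_maxr.
by rewrite hm hn orthoE // sizeE ltnS ?leq_maxl ?leq_maxr.
Qed.

Lemma orthonormal_comp (e : nat -> V) (g : nat -> nat) :
  orthonormal e -> injective g -> orthonormal (fun n => e (g n)).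
Proof. by move=> He ig m n; rewrite He inj_eq. Qed.

Lemma lim_ip (s : nat -> V) l y c : s @ \oo --> l ->
  (\forall n \near \oo, ip (s n) y = c) -> ip l y = c.
Proof.
move=> sl hc.
have h1 := ip_cvgl _ _ y sl.
have h2 : (fun n => (ip (s n) y : R[i]^o)) @ \oo --> (c : R[i]^o).
  exact: cvg_near_cst.
exact: (cvg_unique _ h1 h2).
Qed.

Lemma geom_bound (r : R[i]) N : 0 <= r -> r < 1 ->
  \sum_(0 <= j < N) r ^+ j <= (1 - r)^-1.
Proof.
move=> r0 r1.
have h : \sum_(0 <= j < N) r ^+ j * (1 - r) = 1 - r ^+ N.
  elim: N => [|N IH]; first by rewrite big_geq // expr0 subrr.
  rewrite big_nat_recr //= IH exprSr; ring.
rewrite -[X in _ <= X]mul1r ler_pdivlMr ?subr_gt0 // big_distrl /= h.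
by rewrite lerBlDr lerDl exprn_ge0.
Qed.

Section Shift.
Variable e : nat -> V.
Hypothesis He : orthonormal e.

Definition sig (m : nat) := m.*2.+1.
Lemma sig_inj : injective sig.
Proof. by move=> m n [] /double_inj. Qed.

Definition coef x m := ip x (e (sig m)).
Definition Tser x := series (fun m => coef x m *: e m).
Definition Tfun x := lim (Tser x @ \oo).

Lemma Te : orthonormal (fun n => e (sig n)).
Proof. exact: orthonormal_comp He sig_inj. Qed.

Lemma Tbessel x N : \sum_(0 <= k < N) coef x k * (coef x k)^* <= ip x x.
Proof. exact: (bessel _ Te). Qed.

Lemma Tcvg x : Tser x @ \oo --> Tfun x.
Proof. exact: (ortho_series_cvg _ He _ _ (Tbessel x)). Qed.

Lemma TserE x n : Tser x n = \sum_(0 <= k < n) coef x k *: e k.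
Proof. by []. Qed.

Lemma Tfun_linear : linear_for *:%R Tfun.
Proof.
move=> a u v.
have h : Tser (a *: u + v) = (fun n => a *: Tser u n + Tser v n).
  apply/funext => n; rewrite !TserE scaler_sumr -big_split /=.
  by apply: eq_bigr => k _; rewrite /coef ipDl ipZl scalerDl scalerA.
rewrite /Tfun h; apply: cvg_lim => //.
apply: cvgD; last exact: Tcvg.
exact: cvgZl_tmp (Tcvg u).
Qed.

Lemma Tnorm x : `|Tfun x| <= `|x|.
Proof.
apply: (lim_norm_le _ _ _ (normr_ge0 x) (Tcvg x)) => n.
rewrite -(ler_pXn2r (n:=2)) // ?nnegrE ?normr_ge0 //.
by rewrite -ipxx TserE pyth // -ipxx; exact: Tbessel.
Qed.

Lemma Tcoef x m : ip (Tfun x) (e m) = coef x m.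
Proof.
apply: (lim_ip _ _ _ _ (Tcvg x)); exists m.+1 => // n /= hn.
by rewrite TserE ip_sum_e // leq0n hn.
Qed.


Lemma ip_sum_perp w (a : nat -> R[i]) (g : nat -> nat) p q :
  (forall m, ip w (e m) = 0) -> ip w (\sum_(p <= j < q) a j *: e (g j)) = 0.
Proof.
move=> hw; rewrite ip_sumr; apply: big1 => j _.
by rewrite ipZr hw mulr0.
Qed.

Section Eigen.
Variable lam : R[i].
Hypothesis hl : lam * lam^* < 1.

Definition tau k j := iter j sig k.
Lemma tau_incr k j : (tau k j < tau k j.+1)%N.
Proof. by rewrite /tau iterS /sig ltnS -addnn leq_addr. Qed.
Lemma tau_inj k : injective (tau k).
Proof. exact: incn_inj (leq_mono (homo_ltn ltn_trans (tau_incr k))). Qed.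

Definition vser k := series (fun j => lam ^+ j *: e (tau k j)).
Definition vec k := lim (vser k @ \oo).

Lemma vcvg k : vser k @ \oo --> vec k.
Proof.
have He' := orthonormal_comp e (tau k) He (tau_inj k).
apply: (ortho_series_cvg _ He' (fun j => lam ^+ j) ((1 - lam * lam^*)^-1)) => N.
under eq_bigr do rewrite rmorphXn -exprMn.
by apply: geom_bound => //; rewrite -normCK exprn_ge0.
Qed.

Lemma vcoef_tau k j : ip (vec k) (e (tau k j)) = lam ^+ j.
Proof.
have He' := orthonormal_comp e (tau k) He (tau_inj k).
apply: (lim_ip _ _ _ _ (vcvg k)); exists j.+1 => // n /= hn.
by rewrite (ip_sum_e _ He') leq0n hn.
Qed.

Lemma vcoef_out k m : (forall j, tau k j != m) -> ip (vec k) (e m) = 0.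
Proof.
move=> hm; apply: (lim_ip _ _ _ _ (vcvg k)); exists 0%N => // n _ /=.
rewrite ip_suml; apply: big1 => j _.
by rewrite ipZl He (negbTE (hm j)) mulr0.
Qed.

Lemma Tvec k : ~~ odd k -> Tfun (vec k) = lam *: vec k.
Proof.
move=> hk; set w := Tfun (vec k) - lam *: vec k.
have hw m : ip w (e m) = 0.
  rewrite ipBl ipZl Tcoef /coef.
  case: (pselect (exists j, tau k j = m)) => [[j <-]|hn].
    change (sig (tau k j)) with (tau k j.+1).
    by rewrite !vcoef_tau exprS subrr.
  have h1 j : tau k j != m by apply/eqP => h; apply: hn; exists j.
  have h2 j : tau k j != sig m.
    case: j => [|j].
      by apply/eqP => h; move: hk; rewrite -[k]/(tau k 0) h /sig /= odd_double.
    change (tau k j.+1) with (sig (tau k j)); rewrite (inj_eq sig_inj); exact: h1.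
  by rewrite !vcoef_out // mulr0 subrr.
apply/eqP; rewrite -subr_eq0 -/w; apply/eqP; apply: ipxx_eq0.
apply: (lim_ip (fun n => Tser (vec k) n - lam *: vser k n) w w 0).
  by apply: cvgB; [exact: Tcvg | exact: cvgZl_tmp (vcvg k)].
exists 0%N => // n _ /=.
rewrite ipC ipBr ipZr TserE.
rewrite (ip_sum_perp w (coef (vec k)) (fun j => j)) //.
rewrite (ip_sum_perp w (fun j => lam ^+ j) (tau k)) //.
by rewrite mulr0 subrr rmorph0.
Qed.

Lemma vec_e i j : ip (vec i.*2) (e j.*2) = (i == j)%:R.
Proof.
have [<-|hij] := eqVneq i j.
  by rewrite -[e i.*2]/(e (tau i.*2 0)) vcoef_tau expr0.
rewrite vcoef_out // => jj.
case: jj => [|jj].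
  by rewrite /tau /= (inj_eq double_inj).
apply/eqP => h; have := congr1 odd h.
by rewrite /tau iterS /sig /= !odd_double.
Qed.

End Eigen.
End Shift.
End IP.

Section Pack.
Context {R : realType} {V : completeNormedModType R[i]}.
Definition Tlin (ip : V -> V -> R[i]) (Hip : is_inner_product ip) (e : nat -> V)
  (He : orthonormal ip e) : {linear V -> V} :=
  HB.pack (Tfun ip e) (GRing.isLinear.Build R[i] V V *:%R (Tfun ip e) (Tfun_linear ip Hip e He)).

Lemma TlinE ip Hip e He x : Tlin ip Hip e He x = Tfun ip e x. Proof. by []. Qed.

Lemma Tlin_cont ip Hip e He : continuous (Tlin ip Hip e He).
Proof.
move=> x; apply/cvgrPdist_lt => eps heps; near=> z.
rewrite -linearB TlinE; apply: le_lt_trans (Tnorm ip Hip e He _) _.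
near: z; exact: cvgr_dist_lt.
Unshelve. all: by end_near. Qed.
End Pack.

Section Final.
Context {R : realType} {V : completeNormedModType R[i]}.

Lemma not_fd (E : set V) (w : nat -> V) :
  (forall i, E (w i)) ->
  (forall n (d : 'I_n -> R[i]), \sum_(i < n) d i *: w i = 0 -> forall i, d i = 0) ->
  ~ finite_dim_set E.
Proof.
move=> Ew indep [n [f hf]].
have : forall i : 'I_n.+1, exists c : 'I_n -> R[i], w i = \sum_(j < n) c j *: f j.
  by move=> i; exact: hf.
move=> /choice [C hC].
pose A : 'M[R[i]]_(n.+1, n) := \matrix_(i, j) C i j.
have hk : kermx A != 0.
  by rewrite -mxrank_eq0 mxrank_ker subn_eq0 -ltnNge ltnS rank_leq_col.
have [r hr] : exists r, row r (kermx A) != 0.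
  have [//|hn] := pselect (exists r, row r (kermx A) != 0).
  exfalso; move: hk; apply/negP; rewrite negbK; apply/eqP/row_matrixP => r; rewrite row0.
  by apply/eqP; apply/negPn/negP => h; apply: hn; exists r.
set d := row r (kermx A).
have hd : d *m A = 0 by rewrite /d -row_mul mulmx_ker row0.
have sum0 : \sum_(i < n.+1) d 0 i *: w i = 0.
  under eq_bigr do rewrite hC scaler_sumr.
  rewrite exchange_big /=; apply: big1 => j _.
  under eq_bigr do rewrite scalerA.
  rewrite -scaler_suml.
  have : (d *m A) 0 j = \sum_i d 0 i * C i j.
    by rewrite !mxE; apply: eq_bigr => i _; rewrite !mxE.
  by rewrite hd mxE => <-; rewrite scale0r.
have h0 := indep n.+1 (fun i => d 0 i) sum0.
move/eqP: hr; apply; apply/matrixP => i j; rewrite [RHS]mxE (ord1 i). exact: h0.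
Qed.

End Final.

Theorem corollary2p3 (R : realType) (V : completeNormedModType R[i]) :
  @hilbert_space R V -> @separable R V -> @infinite_dimensional R V ->
  forall T : {linear V -> V}, continuous T ->
  (cinterior (point_spectrum T) = set0 \/
   cinterior (essential_spectrum T) = set0 \/
   (forall a : R[i], a != 0 -> point_spectrum T a ->
      finite_dim_set [set x : V | T x = a *: x])) ->
  ~ universal T.
Proof.
move=> [ip Hip] _ Hinf U Ucont Hcond Huniv.
have [e He] := exists_orthonormal ip Hip Hinf.
have [M [c [[Mcl M0 MD MZ] MU c0 [J [K [JD [JZ [Jc [Kc [KM [KJ [JK UK]]]]]]]]]]]] :=
  Huniv (Tlin ip Hip e He) (Tlin_cont ip Hip e He).
have Jinj x1 x2 : M x1 -> M x2 -> J x1 = J x2 -> x1 = x2.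
  by move=> h1 h2 h; rewrite -(KJ _ h1) -(KJ _ h2) h.
have KD y z : K (y + z) = K y + K z.
  apply: Jinj; [exact: KM | apply: MD; exact: KM |].
  by rewrite JK JD ?KM // !JK.
have KZ a y : K (a *: y) = a *: K y.
  apply: Jinj; [exact: KM | apply: MZ; exact: KM |].
  by rewrite JK JZ ?KM // JK.
have K0 : K 0 = 0 by have := KZ 0 0; rewrite !scale0r.
have Kinj0 z : K z = 0 -> z = 0.
  by move=> h; rewrite -(JK z) h -{1}K0 JK.
have Ksum n (d : 'I_n -> R[i]) (v : 'I_n -> V) :
    K (\sum_(i < n) d i *: v i) = \sum_(i < n) d i *: K (v i).
  rewrite (big_morph K KD K0); apply: eq_bigr => i _; exact: KZ.
have key lam : `|lam| < 1 ->
    point_spectrum U (c * lam) /\ ~ finite_dim_set [set x | U x = (c * lam) *: x].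
  move=> hlam.
  have hl : lam * lam^* < 1 by rewrite -normCK expr_lt1.
  have eig k : ~~ odd k -> U (K (vec e lam k)) = (c * lam) *: K (vec e lam k).
    move=> hk; rewrite (UK _ (KM _)) JK TlinE (Tvec ip Hip e He lam hl k hk).
    by rewrite scalerA KZ.
  split.
    exists (K (vec e lam 0)); split; last exact: eig.
    apply/eqP => h; have := vec_e ip Hip e He lam hl 0 0.
    by rewrite (Kinj0 _ h) (ip0l ip Hip) /= => /esym/eqP; rewrite oner_eq0.
  apply: (not_fd _ (fun i => K (vec e lam i.*2))).
    by move=> i; apply: eig; rewrite odd_double.
  move=> n d hd j.
  have h : \sum_(i < n) d i *: vec e lam (i.*2) = 0 by apply: Kinj0; rewrite Ksum.
  have := congr1 (fun x => ip x (e j.*2)) h; rewrite /= (ip_suml ip Hip) (ip0l ip Hip).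
  rewrite (bigD1 j) //= (ipZl ip Hip) vec_e // eqxx mulr1 big1 ?addr0 // => i hij.
  by rewrite (ipZl ip Hip) vec_e // val_eqE (negbTE hij) mulr0.
have key2 mu : `|mu| < `|c| ->
    point_spectrum U mu /\ ~ finite_dim_set [set x | U x = mu *: x].
  move=> hmu; have := key (mu / c).
  rewrite ![c * _]mulrC divfK // normrM normfV ltr_pdivrMr ?normr_gt0 // mul1r.
  by apply.
have seteq mu : [set x | U x = mu *: x] = [set x | U x - mu *: x = 0].
  apply/seteqP; split => x /=; first by move=> ->; rewrite subrr.
  by move/eqP; rewrite subr_eq0 => /eqP.
case: Hcond => [H|[H|H]].
- have : cinterior (point_spectrum U) 0.
    rewrite /cinterior /interior /=; apply/nbhs_ballP; exists `|c|; first by rewrite /= normr_gt0.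
    move=> mu; rewrite -ball_normE /= sub0r normrN => hmu; exact: (key2 mu hmu).1.
  by rewrite H.
- have : cinterior (essential_spectrum U) 0.
    rewrite /cinterior /interior /=; apply/nbhs_ballP; exists `|c|; first by rewrite /= normr_gt0.
    move=> mu; rewrite -ball_normE /= sub0r normrN => hmu [_ hk _].
    by apply: (key2 mu hmu).2; rewrite seteq.
  by rewrite H.
- have hc2 : `|c / 2%:R| < `|c|.
    rewrite normrM normfV normr_nat ltr_pdivrMr // ltr_pMr ?normr_gt0 //.
    by rewrite ltr1n.
  have [hp hfd] := key2 _ hc2; apply: hfd; apply: H hp.
  by rewrite mulf_neq0 // invr_neq0 // pnatr_eq0.
Qed.
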